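(* Assume: (1) there exists an $\mathcal{A}'$-linear map $\varphi_1:C^1_{\mathrm{CE,der}}(\mathcal{A},\mathcal{B})\to C^0_{\mathrm{CE,der}}(\mathcal{A},\mathcal{B})=\mathcal{B}$ such that every $D$ with $\delta D=0$ satisfies $D=\delta\varphi_1(D)$; and (2) there is an $\mathcal{A}'$-linear map $C^1_{\mathrm{CE,der}}(\mathcal{A}',\mathcal{B})\to\mathrm{Der}(\mathcal{B})$, $D\mapsto D^h$, with $D^h(\phi_0'(a'))=D(a')$ for all $a'\in\mathcal{A}'$. Then there exists $X'\in\lambda\mathrm{Der}(\mathcal{B})[[\lambda]]$ such that $\exp(X')\phi_0'(\mathcal{A}'[[\lambda]])\subseteq C$, i.e. $\sigma(\exp(X')\phi_0'(a'),\Phi(a))=0$ for all $a\in\mathcal{A}$, $a'\in\mathcal{A}'$.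
   Context: $\mathbb{K}$ is a field of characteristic zero. $\mathcal{A},\mathcal{B}$ are commutative $\mathbb{K}$-algebras with Poisson brackets $\pi_0=\{\cdot,\cdot\}_{\mathcal{A}}$, $\sigma_0=\{\cdot,\cdot\}_{\mathcal{B}}$; $\phi_0:\mathcal{A}\to\mathcal{B}$ is a Poisson morphism. $\pi,\sigma$ are formal Poisson deformations of $\pi_0,\sigma_0$ ($\mathbb{K}[[\lambda]]$-bilinear Poisson brackets on $\mathcal{A}[[\lambda]],\mathcal{B}[[\lambda]]$ with these zeroth-order terms), and $\Phi:(\mathcal{A}[[\lambda]],\pi)\to(\mathcal{B}[[\lambda]],\sigma)$ is a $\mathbb{K}[[\lambda]]$-linear Poisson morphism with zeroth-order term $\phi_0$. $\mathcal{A}'$ is the Poisson commutant of $\phi_0(\mathcal{A})$ in $(\mathcal{B},\sigma_0)$ and $\phi_0':\mathcal{A}'\to\mathcal{B}$ the inclusion; $C$ is the commutant of $\Phi(\mathcal{A}[[\lambda]])$ in $(\mathcal{B}[[\lambda]],\sigma)$. $\exp(X')=\sum_n(X')^n/n!$. Chevalley–Eilenberg complex (undeformed brackets): $C^0_{\mathrm{CE}}(\mathcal{A},\mathcal{B})=\mathcal{B}$, $C^k_{\mathrm{CE}}$ = $k$-linear antisymmetric maps $\mathcal{A}^k\to\mathcal{B}$, $(\delta D)(a_0,\dots,a_k)=\sum_j(-1)^j\{\phi_0(a_j),D(\dots,\widehat{a_j},\dots)\}_{\mathcal{B}}+\sum_{i<j}(-1)^{i+j}D(\{a_i,a_j\}_{\mathcal{A}},\dots,\widehat{a_i},\dots,\widehat{a_j},\dots)$;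 in particular $(\delta b)(a)=\{\phi_0(a),b\}_{\mathcal{B}}$ for $b\in\mathcal{B}$. $C^\bullet_{\mathrm{CE,der}}(\mathcal{A},\mathcal{B})$ is the subcomplex of cochains that are derivations along $\phi_0$ in each argument. $C^1_{\mathrm{CE,der}}(\mathcal{A}',\mathcal{B})$ is the space of linear maps $D:\mathcal{A}'\to\mathcal{B}$ with $D(a'_1a'_2)=\phi_0'(a'_1)D(a'_2)+\phi_0'(a'_2)D(a'_1)$. $\mathcal{A}'$ acts on these spaces and on $\mathcal{B}$ by multiplication by $\phi_0'(a')$ in $\mathcal{B}$. *)

(* Defs.v *)
From HB Require Import structures.
From mathcomp Require Import all_boot all_order all_algebra.
Set Implicit Arguments. Unset Strict Implicit. Unset Printing Implicit Defensive.
Import GRing.Theory.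
Local Open Scope ring_scope.

(* Formal power series V[[lambda]] as coefficient sequences. *)
Definition series (V : Type) := nat -> V.

Section Defs.
Variable K : fieldType.

Definition klinear (U V : lmodType K) (f : U -> V) :=
  forall (k : K) (x y : U), f (k *: x + y) = k *: f x + f y.

Definition kbilinear (U V : lmodType K) (b : U -> U -> V) :=
  (forall x, klinear (b x)) /\ (forall y, klinear (fun x => b x y)).

Definition is_poisson (A : comAlgType K) (br : A -> A -> A) :=
  [/\ kbilinear br,
      forall a b, br a b = - br b a,
      forall a b c, br a (br b c) + br b (br c a) + br c (br a b) = 0
    & forall a b c, br a (b * c) = br a b * c + b * br a c].

Definition is_der (B : comAlgType K) (X : B -> B) :=
  klinear X /\ forall x y, X (x * y) = x * X y + y * X x.

Definition sconst (V : zmodType) (c : V) : series V :=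
  fun n => if n == 0%N then c else 0.

Definition smul (A : comAlgType K) (f g : series A) : series A :=
  fun n => \sum_(i < n.+1) f i * g (n - i)%N.

Definition sadd (V : zmodType) (f g : series V) : series V := fun n => f n + g n.
Definition sscale (V : lmodType K) (k : K) (f : series V) : series V :=
  fun n => k *: f n.

(* K[[lambda]]-bilinear extension of a sequence of bilinear maps
   pi = sum_k lambda^k pi_k *)
Definition sbr (A : comAlgType K) (pi : nat -> A -> A -> A) (f g : series A)
  : series A :=
  fun n => \sum_(i < n.+1) \sum_(j < (n - i).+1) pi i (f j) (g (n - i - j)%N).

Definition is_formal_poisson (A : comAlgType K) (pi : nat -> A -> A -> A) :=
  [/\ forall k, kbilinear (pi k),
      forall f g n, sbr pi f g n = - sbr pi g f n,
      forall f g h n,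
        sbr pi f (sbr pi g h) n + sbr pi g (sbr pi h f) n
          + sbr pi h (sbr pi f g) n = 0
    & forall f g h n,
        sbr pi f (smul g h) n = sadd (smul (sbr pi f g) h) (smul g (sbr pi f h)) n].

(* K[[lambda]]-linear extension Phi = sum_k lambda^k phi_k *)
Definition sapp (A B : comAlgType K) (phi : nat -> A -> B) (f : series A)
  : series B :=
  fun n => \sum_(i < n.+1) phi i (f (n - i)%N).

Definition is_formal_poisson_morphism (A B : comAlgType K)
  (pi : nat -> A -> A -> A) (sigma : nat -> B -> B -> B) (phi : nat -> A -> B) :=
  [/\ forall k, klinear (phi k),
      forall n, sapp phi (sconst 1) n = sconst 1 n,
      forall f g n, sapp phi (smul f g) n = smul (sapp phi f) (sapp phi g) n
    & forall f g n, sapp phi (sbr pi f g) n = sbr sigma (sapp phi f) (sapp phi g) n].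

Definition in_commutant (A B : comAlgType K) (brB : B -> B -> B) (phi0 : A -> B)
  (b : B) := forall a : A, brB (phi0 a) b = 0.

Definition is_C1der (A B : comAlgType K) (phi0 : A -> B) (D : A -> B) :=
  klinear D /\ forall a1 a2, D (a1 * a2) = phi0 a1 * D a2 + phi0 a2 * D a1.

Definition delta0 (A B : comAlgType K) (brB : B -> B -> B) (phi0 : A -> B)
  (b : B) : A -> B := fun a => brB (phi0 a) b.

Definition delta1 (A B : comAlgType K) (brA : A -> A -> A) (brB : B -> B -> B)
  (phi0 : A -> B) (D : A -> B) : A -> A -> B :=
  fun a0 a1 => brB (phi0 a0) (D a1) - brB (phi0 a1) (D a0) - D (brA a0 a1).

(* C^1_{CE,der}(A',B), with A' given as a predicate on B; a cochain
   A' -> B is represented by any function B -> B, only its values on A'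
   matter. *)
Definition is_C1der' (B : comAlgType K) (A' : B -> Prop) (D : B -> B) :=
  (forall (k : K) x y, A' x -> A' y -> D (k *: x + y) = k *: D x + D y) /\
  (forall x y, A' x -> A' y -> D (x * y) = x * D y + y * D x).

(* action of X' = sum_k lambda^k X_k on B[[lambda]] *)
Definition sder (B : comAlgType K) (X : nat -> B -> B) (f : series B) : series B :=
  fun n => \sum_(i < n.+1) X i (f (n - i)%N).

(* exp(X') f = sum_m X'^m f / m!  (the sum is finite in each degree when X_0 = 0) *)
Definition sexp (B : comAlgType K) (X : nat -> B -> B) (f : series B) : series B :=
  fun n => \sum_(m < n.+1) (m`!%:R : K)^-1 *: iter m (sder X) f n.

End Defs.

(* Main.v *)
Require Import Defs.
From mathcomp Require Import all_boot all_order all_algebra.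
From mathcomp Require Import zify.
From Stdlib Require Import FunctionalExtensionality.
Set Implicit Arguments. Unset Strict Implicit. Unset Printing Implicit Defensive.
Import GRing.Theory.
Local Open Scope ring_scope.

Section Tri.
Variable V : zmodType.

Lemma tri_inner n i (F : nat -> V) : (i <= n)%N ->
  \sum_(j < (n - i).+1) F j = \sum_(j < n.+1) (if (i + j <= n)%N then F j else 0).
Proof.
move=> hi; rewrite (big_ord_widen n.+1 F) ?ltnS ?leq_subr // big_mkcond /=.
apply: eq_bigr => j _; have -> : (j < (n - i).+1)%N = (i + j <= n)%N by apply/idP/idP; lia.
by [].
Qed.

Lemma tri_swap n (F : nat -> nat -> V) :
  \sum_(i < n.+1) \sum_(j < (n - i).+1) F i j = \sum_(j < n.+1) \sum_(i < (n - j).+1) F i j.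
Proof.
rewrite (eq_bigr (fun i : 'I_n.+1 => \sum_(j < n.+1) (if (i + j <= n)%N then F i j else 0))); last first.
  by move=> i _; rewrite tri_inner // -ltnS.
rewrite exchange_big /=; apply: eq_bigr => j _; rewrite (tri_inner (fun i => F i j)) ?leq_ord //.
by apply: eq_bigr => i _; rewrite addnC.
Qed.

Lemma tri_shift n (F : nat -> nat -> V) :
  \sum_(k < n.+1) \sum_(i < k.+1) F i (k - i)%N = \sum_(i < n.+1) \sum_(j < (n - i).+1) F i j.
Proof.
rewrite (eq_bigr (fun k : 'I_n.+1 => \sum_(i < n.+1) (if (i <= k)%N then F i (k - i)%N else 0))); last first.
  move=> k _; rewrite (big_ord_widen n.+1 (fun i => F i (k - i)%N)) ?ltnS ?leq_ord // big_mkcond /=.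
  by apply: eq_bigr => i _; rewrite ltnS.
rewrite exchange_big /=; apply: eq_bigr => i _.
rewrite -big_mkcond /= (eq_bigl (fun k : 'I_n.+1 => true && (i <= k)%N)) //.
rewrite -(big_geq_mkord i n.+1 xpredT (fun k => F i (k - i)%N)).
rewrite -{1}(add0n i) big_addn big_mkord subSn; last by rewrite -ltnS.
by apply: eq_bigr => j _; rewrite addnK.
Qed.
End Tri.

Definition shift (V : zmodType) (f : series V) : series V :=
  fun n => if n is n'.+1 then f n' else 0.
Definition stail (V : zmodType) (f : series V) : series V := fun n => f n.+1.

Lemma decomp (V : zmodType) (f : series V) : f = sadd (sconst (f 0%N)) (shift (stail f)).
Proof. by apply: functional_extensionality => -[|n]; rewrite /sadd /sconst /= ?addr0 ?add0r. Qed.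

Section Klin.
Variables (K : fieldType) (U V : lmodType K).
Lemma klin0 (f : U -> V) : klinear f -> f 0 = 0.
Proof.
move=> h; have := h 1 0 0; rewrite !scale1r addr0 => e.
by apply: (@addrI _ (f 0)); rewrite addr0 -e.
Qed.
Lemma klinD (f : U -> V) : klinear f -> forall x y, f (x + y) = f x + f y.
Proof. by move=> h x y; have := h 1 x y; rewrite !scale1r. Qed.
Lemma klinZ (f : U -> V) : klinear f -> forall k x, f (k *: x) = k *: f x.
Proof. by move=> h k x; rewrite -(addr0 (k *: x)) h klin0 // addr0. Qed.
Lemma klinN (f : U -> V) : klinear f -> forall x, f (- x) = - f x.
Proof. by move=> h x; rewrite -scaleN1r klinZ // scaleN1r. Qed.
Lemma klinMn (f : U -> V) : klinear f -> forall x m, f (x *+ m) = f x *+ m.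
Proof. move=> h x; elim=> [|m ih]; first by rewrite !mulr0n klin0. by rewrite !mulrS klinD // ih. Qed.
Lemma klin_sum (f : U -> V) : klinear f -> forall (I : Type) (r : seq I) (P : pred I) (F : I -> U),
  f (\sum_(i <- r | P i) F i) = \sum_(i <- r | P i) f (F i).
Proof.
move=> h I r P F; elim/big_rec2: _ => [|i y1 y2 _ <-]; first exact: klin0.
by rewrite klinD.
Qed.
End Klin.

Section Ser.
Variables (K : fieldType) (B : comAlgType K).

Lemma smul_low_l (f g : series B) N : (forall i, (i < N)%N -> f i = 0) ->
  smul f g N = f N * g 0%N.
Proof.
move=> h; rewrite /smul big_ord_recr /= subnn big1 ?add0r // => i _.
by rewrite h ?mul0r.
Qed.

Lemma smul_low_r (f g : series B) N : (forall i, (i < N)%N -> g i = 0) ->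
  smul f g N = f 0%N * g N.
Proof.
move=> h; rewrite /smul big_ord_recl /= subn0 big1 ?addr0 // => i _.
by rewrite h ?mulr0 //; rewrite /bump /=; have := ltn_ord i; lia.
Qed.

Lemma smul_order (f g : series B) p q n : (forall i, (i < p)%N -> f i = 0) ->
  (forall i, (i < q)%N -> g i = 0) -> (n < p + q)%N -> smul f g n = 0.
Proof.
move=> hf hg hn; rewrite /smul big1 // => i _.
case: (ltnP i p) => hi; first by rewrite hf ?mul0r.
by rewrite hg ?mulr0 //; have := ltn_ord i; lia.
Qed.

Lemma smul_const (a b : B) : smul (sconst a) (sconst b) = sconst (a * b).
Proof.
apply: functional_extensionality => n; rewrite /smul /sconst.
case: n => [|n]; first by rewrite big_ord1.
rewrite big1 // => -[[|k] hk] _ /=; first by rewrite mulr0.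
by rewrite mul0r.
Qed.

Variable pi : nat -> B -> B -> B.
Hypothesis Hpi : forall k, kbilinear (pi k).

Lemma pi0r k x : pi k x 0 = 0. Proof. exact: klin0 (proj1 (Hpi k) x). Qed.
Lemma pi0l k y : pi k 0 y = 0. Proof. exact: (klin0 (proj2 (Hpi k) y)). Qed.
Lemma piDr k x y z : pi k x (y + z) = pi k x y + pi k x z. Proof. exact: (klinD (proj1 (Hpi k) x) y z). Qed.
Lemma piDl k x y z : pi k (x + y) z = pi k x z + pi k y z.
Proof. exact: (klinD (proj2 (Hpi k) z) x y). Qed.
Lemma piZl k c x z : pi k (c *: x) z = c *: pi k x z.
Proof. exact: (klinZ (proj2 (Hpi k) z) c x). Qed.
Lemma piZr k c x z : pi k z (c *: x) = c *: pi k z x.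
Proof. exact: (klinZ (proj1 (Hpi k) z) c x). Qed.

Lemma sbr_addl f f' g n : sbr pi (sadd f f') g n = sbr pi f g n + sbr pi f' g n.
Proof.
rewrite /sbr -big_split /=; apply: eq_bigr => i _; rewrite -big_split /=.
by apply: eq_bigr => j _; rewrite /sadd piDl.
Qed.
Lemma sbr_addr f g g' n : sbr pi f (sadd g g') n = sbr pi f g n + sbr pi f g' n.
Proof.
rewrite /sbr -big_split /=; apply: eq_bigr => i _; rewrite -big_split /=.
by apply: eq_bigr => j _; rewrite /sadd piDr.
Qed.
Lemma sbr_scalel c f g n : sbr pi (sscale c f) g n = c *: sbr pi f g n.
Proof.
rewrite /sbr scaler_sumr; apply: eq_bigr => i _; rewrite scaler_sumr.
by apply: eq_bigr => j _; rewrite /sscale piZl.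
Qed.
Lemma sbr_scaler c f g n : sbr pi f (sscale c g) n = c *: sbr pi f g n.
Proof.
rewrite /sbr scaler_sumr; apply: eq_bigr => i _; rewrite scaler_sumr.
by apply: eq_bigr => j _; rewrite /sscale piZr.
Qed.

Lemma sbr_0 f g : sbr pi f g 0%N = pi 0%N (f 0%N) (g 0%N).
Proof. by rewrite /sbr !big_ord1. Qed.

Lemma sbr_lowr f g N : (forall l, (l < N)%N -> g l = 0) -> sbr pi f g N = pi 0%N (f 0%N) (g N).
Proof.
move=> h; rewrite /sbr big_ord_recl /= big_ord_recl /= !subn0.
rewrite big1 ?addr0; last by move=> j _; rewrite h ?pi0r //= /bump /=; have := ltn_ord j; lia.
rewrite big1 ?addr0 // => i _; rewrite big1 // => j _; rewrite h ?pi0r //.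
rewrite /bump /=; have := ltn_ord i; have := ltn_ord j; lia.
Qed.

Lemma sbr_lowl f g N : (forall l, (l < N)%N -> f l = 0) -> sbr pi f g N = pi 0%N (f N) (g 0%N).
Proof.
move=> h; rewrite /sbr big_ord_recl /= subn0 big_ord_recr /= subnn.
rewrite big1 ?add0r; last by move=> j _; rewrite h ?pi0l.
rewrite big1 ?addr0 // => i _; rewrite big1 // => j _; rewrite h ?pi0l //.
have hb : bump 0 i = i.+1 by []. move: (ltn_ord i) (ltn_ord j); lia.
Qed.

Lemma sbr_shiftl f g n : sbr pi (shift f) g n.+1 = sbr pi f g n.
Proof.
rewrite /sbr big_ord_recr /= subnn big_ord1 /= pi0l addr0.
apply: eq_bigr => i _ /=; have hi := ltn_ord i.
rewrite (_ : (n.+1 - i).+1 = (n - i).+2)%N; last by lia.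
rewrite big_ord_recl /= pi0l add0r; apply: eq_bigr => j _ /=.
by rewrite /bump /= add1n; congr (pi _ _ (g _)); lia.
Qed.

Lemma sbr_shiftr f g n : sbr pi f (shift g) n.+1 = sbr pi f g n.
Proof.
rewrite /sbr big_ord_recr /= subnn big_ord1 /= pi0r addr0.
apply: eq_bigr => i _ /=; have hi := ltn_ord i.
rewrite (_ : (n.+1 - i).+1 = (n - i).+2)%N; last by lia.
rewrite big_ord_recr /= (_ : (n.+1 - i - (n - i).+1)%N = 0%N); last by lia.
rewrite pi0r addr0; apply: eq_bigr => j _ /=; have hj := ltn_ord j.
by rewrite (_ : (n.+1 - i - j)%N = (n - i - j).+1)%N; last by lia.
Qed.

End Ser.

Section App.
Variables (K : fieldType) (A B : comAlgType K).
Variable phi : nat -> A -> B.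
Hypothesis Hphi : forall k, klinear (phi k).

Lemma sapp_add f g n : sapp phi (sadd f g) n = sapp phi f n + sapp phi g n.
Proof. by rewrite /sapp -big_split; apply: eq_bigr => i _; rewrite /sadd klinD. Qed.

Lemma sapp_scale c f n : sapp phi (sscale c f) n = c *: sapp phi f n.
Proof. by rewrite /sapp scaler_sumr; apply: eq_bigr => i _; rewrite /sscale klinZ. Qed.

Lemma sapp_0 g : sapp phi g 0%N = phi 0%N (g 0%N).
Proof. by rewrite /sapp big_ord1. Qed.

Lemma sapp_shift g : sapp phi (shift g) = shift (sapp phi g).
Proof.
apply: functional_extensionality => -[|n]; first by rewrite sapp_0 /= klin0.
rewrite /sapp big_ord_recr /= subnn /= klin0 // addr0.
apply: eq_bigr => i _ /=; have hi := ltn_ord i.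
by rewrite (_ : (n.+1 - i)%N = (n - i).+1)%N; last by lia.
Qed.

Lemma sapp_const a n : sapp phi (sconst a) n = phi n a.
Proof.
rewrite /sapp big_ord_recr /= subnn /= big1 ?add0r // => i _.
rewrite /sconst; have hi := ltn_ord i.
by rewrite (_ : (n - i == 0)%N = false) ?klin0 //; apply/negbTE; lia.
Qed.
End App.

Section Der.
Variables (K : fieldType) (B : comAlgType K).
Variable X : nat -> B -> B.
Hypothesis HX : forall k, klinear (X k).
Hypothesis HX0 : forall b, X 0%N b = 0.

Lemma sder_sapp f : sder X f = sapp X f. Proof. by []. Qed.

Lemma iter_add m f g : iter m (sder X) (sadd f g) = sadd (iter m (sder X) f) (iter m (sder X) g).
Proof.
elim: m => [|m ih] //=; rewrite ih; apply: functional_extensionality => n.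
by rewrite /sadd !sder_sapp sapp_add.
Qed.

Lemma iter_scale m c f : iter m (sder X) (sscale c f) = sscale c (iter m (sder X) f).
Proof.
elim: m => [|m ih] //=; rewrite ih; apply: functional_extensionality => n.
by rewrite /sscale !sder_sapp sapp_scale.
Qed.

Lemma sexp_add f g n : sexp X (sadd f g) n = sexp X f n + sexp X g n.
Proof.
rewrite /sexp -big_split; apply: eq_bigr => m _.
by rewrite iter_add /sadd scalerDr.
Qed.

Lemma sexp_scale c f n : sexp X (sscale c f) n = c *: sexp X f n.
Proof.
rewrite /sexp scaler_sumr; apply: eq_bigr => m _.
by rewrite iter_scale /sscale !scalerA mulrC.
Qed.

Lemma iter_shift m f : iter m (sder X) (shift f) = shift (iter m (sder X) f).
Proof. by elim: m => [|m ih] //=; rewrite ih !sder_sapp sapp_shift. Qed.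

Lemma iter_order m f n : (n < m)%N -> iter m (sder X) f n = 0.
Proof.
elim: m n => [|m ih] n //= hn; rewrite /sder big1 // => i _.
case: i => [[|i'] hi] /=; first by rewrite HX0.
rewrite ih ?klin0 //; lia.
Qed.

Lemma sexp_0 f : sexp X f 0%N = f 0%N.
Proof. by rewrite /sexp big_ord1 /= invr1 scale1r. Qed.

Lemma sexp_shift f : sexp X (shift f) = shift (sexp X f).
Proof.
apply: functional_extensionality => -[|n]; first by rewrite sexp_0.
have e : forall m, iter m (sder X) (shift f) n.+1 = iter m (sder X) f n.
  by move=> m; rewrite iter_shift.
rewrite /sexp; under eq_bigr do rewrite e.
by rewrite big_ord_recr (@iter_order n.+1) // scaler0 /= addr0.
Qed.

Lemma sexp_wide f n M : (n < M)%N ->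
  sexp X f n = \sum_(m < M) (m`!%:R : K)^-1 *: iter m (sder X) f n.
Proof.
move=> hM; rewrite /sexp (big_ord_widen M (fun m => (m`!%:R : K)^-1 *: iter m (sder X) f n)) //.
rewrite big_mkcond /=; apply: eq_bigr => m _; case: ifP => // /negbT hm.
by rewrite iter_order ?scaler0 //; lia.
Qed.
End Der.

Lemma sder_def (K : fieldType) (B : comAlgType K) (X : nat -> B -> B) g n :
  sder X g n = \sum_(i < n.+1) X i (g (n - i)%N).
Proof. by []. Qed.

Section Local.
Variables (K : fieldType) (B : comAlgType K).
Variables X Y : nat -> B -> B.

Lemma iter_local n : (forall i b, (i <= n)%N -> X i b = Y i b) ->
  forall m f j, (j <= n)%N -> iter m (sder X) f j = iter m (sder Y) f j.
Proof.
move=> h; elim=> [|m ih] f j hj //=; rewrite /sder; apply: eq_bigr => i _.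
have hi := ltn_ord i; rewrite h; last by lia.
by rewrite ih //; lia.
Qed.

Lemma sexp_local n : (forall i b, (i <= n)%N -> X i b = Y i b) ->
  forall f j, (j <= n)%N -> sexp X f j = sexp Y f j.
Proof.
move=> h f j hj; rewrite /sexp; apply: eq_bigr => m _.
by rewrite (iter_local h).
Qed.

Hypothesis HX : forall k, klinear (X k).
Hypothesis HX0 : forall b, X 0%N b = 0.
Hypothesis HY : forall k, klinear (Y k).
Hypothesis HY0 : forall b, Y 0%N b = 0.

Lemma sexp_update N : (0 < N)%N -> (forall b, X N b = 0) ->
  (forall i b, (i < N)%N -> Y i b = X i b) ->
  forall f, sexp Y f N = sexp X f N + Y N (f 0%N).
Proof.
move=> hN hXN hYX f; case: N hN hXN hYX => [//|N] _ hXN hYX.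
have claim : forall m, iter m (sder Y) f N.+1 =
    iter m (sder X) f N.+1 + (if m == 1%N then Y N.+1 (f 0%N) else 0).
  case=> [|[|m]]; first by rewrite /= addr0.
    rewrite /= !sder_sapp /sapp big_ord_recr [in RHS]big_ord_recr /= subnn hXN addr0.
    congr (_ + _); apply: eq_bigr => i _; rewrite hYX //.
  have -> : (m.+2 == 1%N) = false by [].
  rewrite addr0 iterS [in RHS]iterS sder_def [in RHS]sder_def; apply: eq_bigr => k _.
  have hk := ltn_ord k; case: (posnP k) => [->|hk0]; first by rewrite HX0 HY0.
  case: (ltnP k N.+1) => hkN.
    rewrite hYX // (iter_local (n:=N)) //; last by lia.
    by move=> i' b hi'; rewrite hYX //; lia.
  have -> : (N.+1 - k = 0)%N by lia.
  by rewrite !iter_order // !klin0.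
rewrite /sexp; under eq_bigr do rewrite claim scalerDr.
rewrite big_split /=; congr (_ + _).
rewrite big_ord_recl /= scaler0 add0r big_ord_recl /= invr1 scale1r big1 ?addr0 //.
by move=> i _; rewrite scaler0.
Qed.
End Local.

Lemma pascal (V : zmodType) m (T : nat -> nat -> V) :
  \sum_(j < m.+1) (T j.+1 (m - j)%N + T j (m.+1 - j)%N) *+ 'C(m, j)
  = \sum_(j < m.+2) T j (m.+1 - j)%N *+ 'C(m.+1, j).
Proof.
rewrite big_ord_recl [in RHS]big_ord_recl /= !bin0 !subn0 !mulr1n.
have e : forall j : 'I_m.+1, T (bump 0 j) (m.+1 - bump 0 j)%N *+ 'C(m.+1, bump 0 j) =
   T j.+1 (m - j)%N *+ 'C(m, j.+1) + T j.+1 (m - j)%N *+ 'C(m, j).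
  by move=> j; rewrite /bump /= add1n subSS binS mulrnDr.
rewrite (eq_bigr _ (fun j _ => e j)) big_split /=.
have e2 : forall j : 'I_m, (T (bump 0 j).+1 (m - bump 0 j)%N + T (bump 0 j) (m.+1 - bump 0 j)%N) *+ 'C(m, bump 0 j)
   = T (bump 0 j).+1 (m - bump 0 j)%N *+ 'C(m, bump 0 j) + T j.+1 (m - j)%N *+ 'C(m, j.+1).
  by move=> j; rewrite mulrnDl /bump /= add1n subSS.
rewrite (eq_bigr _ (fun j _ => e2 j)) big_split /=.
rewrite [\sum_(i < m.+1) T i.+1 (m - i)%N *+ 'C(m, i.+1)]big_ord_recr /= bin_small // mulr0n addr0.
rewrite [\sum_(i < m.+1) T i.+1 (m - i)%N *+ 'C(m, i)]big_ord_recl /= subn0 bin0 mulr1n.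
rewrite (addrC (T 1%N m)) -addrA; congr (_ + _); by rewrite addrA addrC.
Qed.

Section Mul.
Variables (K : fieldType) (B : comAlgType K).
Variable X : nat -> B -> B.
Hypothesis HXd : forall k, is_der (X k).
Hypothesis HX0 : forall b, X 0%N b = 0.

Let HX k : klinear (X k) := proj1 (HXd k).

Lemma derM k a b : X k (a * b) = a * X k b + b * X k a.
Proof. exact: (proj2 (HXd k)). Qed.

Lemma sder_leib f g n : sder X (smul f g) n = smul (sder X f) g n + smul f (sder X g) n.
Proof.
rewrite sder_def /smul.
have e1 : \sum_(k < n.+1) sder X f k * g (n - k)%N =
   \sum_(i < n.+1) \sum_(j < (n - i).+1) X i (f j) * g (n - i - j)%N.
  rewrite -(@tri_shift _ n (fun i j => X i (f j) * g (n - i - j)%N)).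
  apply: eq_bigr => k _; rewrite sder_def mulr_suml; apply: eq_bigr => i _.
  have hk := ltn_ord k; have hi := ltn_ord i.
  by rewrite (_ : (n - i - (k - i))%N = (n - k)%N) //; lia.
have e2 : \sum_(k < n.+1) f k * sder X g (n - k)%N =
   \sum_(i < n.+1) \sum_(j < (n - i).+1) f j * X i (g (n - i - j)%N).
  have := @tri_swap _ n (fun i j => f j * X i (g (n - i - j)%N)); rewrite /= => ->.
  apply: eq_bigr => k _; rewrite sder_def mulr_sumr; apply: eq_bigr => i _.
  by rewrite subnAC.
rewrite e1 e2 -big_split /=; apply: eq_bigr => i _.
rewrite (klin_sum (HX i)) -big_split /=; apply: eq_bigr => j _.
by rewrite derM addrC mulrC [X i (f j) * _]mulrC.
Qed.

Lemma iter_leib m f g n : iter m (sder X) (smul f g) n =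
  \sum_(j < m.+1) smul (iter j (sder X) f) (iter (m - j) (sder X) g) n *+ 'C(m, j).
Proof.
elim: m n => [|m ih] n; first by rewrite big_ord1 /= mulr1n.
rewrite iterS sder_def.
under eq_bigr do rewrite ih (klin_sum (HX _)).
under eq_bigr do under eq_bigr do rewrite (klinMn (HX _)).
rewrite exchange_big /=.
under eq_bigr do rewrite sumrMnl.
rewrite -(pascal m (fun a b => smul (iter a (sder X) f) (iter b (sder X) g) n)).
apply: eq_bigr => j _; congr (_ *+ _).
have hj := ltn_ord j.
rewrite -sder_def sder_leib; congr (_ + _).
by rewrite (_ : (m.+1 - j = (m - j).+1)%N) //; lia.
Qed.
End Mul.

Section Exp.
Variables (K : fieldType) (B : comAlgType K).
Hypothesis HK : [pchar K] =i pred0.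
Variable X : nat -> B -> B.
Hypothesis HXd : forall k, is_der (X k).
Hypothesis HX0 : forall b, X 0%N b = 0.

Let HX k : klinear (X k) := proj1 (HXd k).

Lemma natr_neq0 m : (0 < m)%N -> (m%:R : K) != 0.
Proof. by move=> hm; rewrite (proj1 (GRing.pcharf0P K) HK); lia. Qed.

Lemma coefC m j : (j <= m)%N ->
  (m`!%:R : K)^-1 * ('C(m, j))%:R = (j`!%:R)^-1 * ((m - j)`!%:R)^-1.
Proof.
move=> hj.
have h1 : ('C(m, j)%:R : K) != 0 by apply: natr_neq0; rewrite bin_gt0.
have h2 := natr_neq0 (fact_gt0 j).
have h3 := natr_neq0 (fact_gt0 (m - j)).
rewrite -(bin_fact hj) !natrM.
by rewrite invfM invfM mulrC !mulrA mulfV // mul1r.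
Qed.

Lemma sexp_mul f g n : sexp X (smul f g) n = smul (sexp X f) (sexp X g) n.
Proof.
pose a m := (m`!%:R : K)^-1.
pose F p := iter p (sder X) f. pose G q := iter q (sder X) g.
have eR : smul (sexp X f) (sexp X g) n =
   \sum_(p < n.+1) \sum_(q < n.+1) (a p * a q) *: smul (F p) (G q) n.
  rewrite /smul.
  have e : forall i : 'I_n.+1, sexp X f i * sexp X g (n - i)%N =
     \sum_(p < n.+1) \sum_(q < n.+1) (a p * a q) *: (F p i * G q (n - i)%N).
    move=> i; have hi := ltn_ord i.
    rewrite (sexp_wide HX HX0 f (M := n.+1)) // (sexp_wide HX HX0 g (M := n.+1)); last by lia.
    rewrite mulr_suml; apply: eq_bigr => p _; rewrite mulr_sumr; apply: eq_bigr => q _.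
    by rewrite -scalerAl -scalerAr scalerA.
  rewrite (eq_bigr _ (fun i _ => e i)) exchange_big /=; apply: eq_bigr => p _.
  rewrite exchange_big /=; apply: eq_bigr => q _.
  by rewrite scaler_sumr.
rewrite eR /sexp.
have e1 : forall m : 'I_n.+1, a m *: iter m (sder X) (smul f g) n =
   \sum_(j < m.+1) (a j * a (m - j)%N) *: smul (F j) (G (m - j)%N) n.
  move=> m; rewrite iter_leib // scaler_sumr; apply: eq_bigr => j _.
  have hj := ltn_ord j.
  by rewrite -scaler_nat scalerA /a coefC //; lia.
rewrite (eq_bigr _ (fun m _ => e1 m)).
have := @tri_shift _ n (fun j q => (a j * a q) *: smul (F j) (G q) n); rewrite /= => ->.
apply: eq_bigr => p _; have hp := ltn_ord p.
rewrite (big_ord_widen n.+1 (fun q => (a p * a q) *: smul (F p) (G q) n)); last by lia.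
rewrite big_mkcond /=; apply: eq_bigr => q _; case: ifP => // /negbT hq.
rewrite (@smul_order _ _ _ _ p q) ?scaler0 //.
- by move=> i hi; rewrite /F iter_order.
- by move=> i hi; rewrite /G iter_order.
- lia.
Qed.
End Exp.

Lemma sbr_local (K : fieldType) (B : comAlgType K) (pi : nat -> B -> B -> B) F F' G n :
  (forall j, (j <= n)%N -> F j = F' j) -> sbr pi F G n = sbr pi F' G n.
Proof.
move=> h; rewrite /sbr; apply: eq_bigr => i _; apply: eq_bigr => j _.
by rewrite h //; have := ltn_ord i; have := ltn_ord j; lia.
Qed.

Lemma is_der0 (K : fieldType) (B : comAlgType K) : is_der (fun _ : B => 0 : B).
Proof. by split; [move=> k x y; rewrite scaler0 addr0 | move=> x y; rewrite !mulr0 addr0]. Qed.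

Lemma C1der_mul (K : fieldType) (A B : comAlgType K) (phi0 : A -> B) (c : B) D :
  is_C1der phi0 D -> is_C1der phi0 (fun a => c * D a).
Proof.
move=> [hl hd]; split; first by move=> k x y; rewrite hl mulrDr scalerAr.
by move=> x y; rewrite hd mulrDr !mulrA ![c * phi0 _]mulrC.
Qed.

Section Main.
Variables (K : fieldType) (A B : comAlgType K).
Variables (pi : nat -> A -> A -> A) (sigma : nat -> B -> B -> B) (phi : nat -> A -> B).
Hypothesis HK : [pchar K] =i pred0.
Hypothesis HsigB : is_poisson (sigma 0%N).
Hypothesis Hsigma : is_formal_poisson sigma.
Hypothesis HPhi : is_formal_poisson_morphism pi sigma phi.
Variable phi1 : (A -> B) -> B.
Hypothesis Hphi1_add : forall D1 D2, is_C1der (phi 0%N) D1 -> is_C1der (phi 0%N) D2 ->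
      phi1 (fun a => D1 a + D2 a) = phi1 D1 + phi1 D2.
Hypothesis Hphi1_lin : forall (a' : B) D, in_commutant (sigma 0%N) (phi 0%N) a' ->
      is_C1der (phi 0%N) D -> phi1 (fun a => a' * D a) = a' * phi1 D.
Hypothesis Hphi1 : forall D, is_C1der (phi 0%N) D ->
      (forall a0 a1, delta1 (pi 0%N) (sigma 0%N) (phi 0%N) D a0 a1 = 0) ->
      forall a, D a = delta0 (sigma 0%N) (phi 0%N) (phi1 D) a.
Variable h : (B -> B) -> (B -> B).
Hypothesis Hh_der : forall D, is_C1der' (in_commutant (sigma 0%N) (phi 0%N)) D ->
      is_der (h D).
Hypothesis Hh_ext : forall D, is_C1der' (in_commutant (sigma 0%N) (phi 0%N)) D ->
      forall a', in_commutant (sigma 0%N) (phi 0%N) a' -> h D a' = D a'.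

Notation A' := (in_commutant (sigma 0%N) (phi 0%N)).
Notation Phi := (sapp phi).

Let Hsk : forall k, kbilinear (sigma k). Proof. by case: Hsigma. Qed.
Let Hanti : forall f g n, sbr sigma f g n = - sbr sigma g f n. Proof. by case: Hsigma. Qed.
Let Hjac : forall f g k n, sbr sigma f (sbr sigma g k) n + sbr sigma g (sbr sigma k f) n
          + sbr sigma k (sbr sigma f g) n = 0. Proof. by case: Hsigma. Qed.
Let Hleib : forall f g k n, sbr sigma f (smul g k) n =
   sadd (smul (sbr sigma f g) k) (smul g (sbr sigma f k)) n. Proof. by case: Hsigma. Qed.
Let Hphik : forall k, klinear (phi k). Proof. by case: HPhi. Qed.
Let HPmul : forall f g n, Phi (smul f g) n = smul (Phi f) (Phi g) n. Proof. by case: HPhi. Qed.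
Let HPbr : forall f g n, Phi (sbr pi f g) n = sbr sigma (Phi f) (Phi g) n. Proof. by case: HPhi. Qed.

Lemma A'0 : A' 0. Proof. by move=> a; rewrite pi0r. Qed.

Lemma A'sc (k : K) : A' (k *: 1).
Proof.
move=> a; have [_ _ _ L] := HsigB.
have e : sigma 0%N (phi 0%N a) 1 = 0.
  have := L (phi 0%N a) 1 1; rewrite !mulr1 !mul1r => e.
  by apply: (@addrI _ (sigma 0%N (phi 0%N a) 1)); rewrite addr0 -e.
by rewrite piZr // e scaler0.
Qed.

Definition Delta (Y : nat -> B -> B) (N : nat) (b : B) : B :=
  phi1 (fun a => sbr sigma (sexp Y (sconst b)) (Phi (sconst a)) N).

Fixpoint pref (N : nat) : nat -> B -> B :=
  match N with
  | 0 => fun _ _ => 0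
  | N'.+1 => fun i => if (i == N') && (0 < N')%N then h (Delta (pref N') N') else pref N' i
  end.

Lemma pref_stable N M i : (i < N)%N -> (N <= M)%N -> pref M i = pref N i.
Proof.
move=> hi; elim: M => [|M ih] hM; first by have -> : N = 0%N by lia.
case: (ltnP N M.+1) => hNM; last by have -> : N = M.+1 by lia.
rewrite /= ih; last by lia.
by have -> : (i == M) = false by apply/negbTE; lia.
Qed.

Definition Inv N :=
  [/\ forall i, is_der (pref N i), forall b, pref N 0%N b = 0,
      forall i b, (N <= i)%N -> pref N i b = 0 &
      forall f g, (forall n, A' (f n)) -> forall n, (n < N)%N ->
        sbr sigma (sexp (pref N) f) (Phi g) n = 0].

Lemma anti0 x y : sigma 0%N x y = - sigma 0%N y x.
Proof. by case: HsigB. Qed.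

Lemma deg0 Y f g : (forall b, Y 0%N b = 0) -> A' (f 0%N) ->
  sbr sigma (sexp Y f) (Phi g) 0%N = 0.
Proof.
move=> h0 hf; rewrite sbr_0 sexp_0 // sapp_0.
by rewrite anti0 hf oppr0.
Qed.

Lemma Inv1 : Inv 1.
Proof.
have p1 : forall i, pref 1 i = fun _ => 0 by move=> i; rewrite /= andbF.
split.
- by move=> i; rewrite p1; exact: is_der0.
- by move=> b; rewrite p1.
- by move=> i b _; rewrite p1.
- move=> f g hf n hn; have -> : n = 0%N by lia.
  by apply: deg0 => // b; rewrite p1.
Qed.

Section Step.
Variable N : nat.
Hypothesis hN : (0 < N)%N.
Hypothesis IH : Inv N.
Let Y := pref N.
Let E := sexp Y.

Let HYd : forall i, is_der (Y i). Proof. by case: IH. Qed.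
Let HY0 : forall b, Y 0%N b = 0. Proof. by case: IH. Qed.
Let HYN : forall i b, (N <= i)%N -> Y i b = 0. Proof. by case: IH. Qed.
Let HYl : forall i, klinear (Y i). Proof. by move=> i; case: (HYd i). Qed.
Let IHc : forall f g, (forall n, A' (f n)) -> forall n, (n < N)%N ->
        sbr sigma (E f) (Phi g) n = 0. Proof. by case: IH. Qed.

Lemma A'const b : A' b -> forall n, A' (sconst b n).
Proof. by move=> hb n; rewrite /sconst; case: ifP => // _; exact: A'0. Qed.

Lemma E_add f g : E (sadd f g) = sadd (E f) (E g).
Proof. by apply: functional_extensionality => n; rewrite /E sexp_add. Qed.
Lemma Phi_add f g : Phi (sadd f g) = sadd (Phi f) (Phi g).
Proof. by apply: functional_extensionality => n; rewrite sapp_add. Qed.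

Lemma E_shift f : E (shift f) = shift (E f).
Proof. by rewrite /E sexp_shift. Qed.

Lemma red f g : (forall n, A' (f n)) ->
  sbr sigma (E f) (Phi g) N = sbr sigma (E (sconst (f 0%N))) (Phi (sconst (g 0%N))) N.
Proof.
move=> hf; have [N' eN] : exists N', N = N'.+1 by exists N.-1; lia.
rewrite eN {1}(decomp f) E_add sbr_addl // (E_shift (stail f)) sbr_shiftl //.
rewrite [X in _ + X]IHc ?addr0 //; [|by move=> n; exact: hf|lia].
rewrite {1}(decomp g) Phi_add sbr_addr // (sapp_shift Hphik (stail g)) sbr_shiftr //.
rewrite [X in _ + X]IHc ?addr0 //; [exact: A'const|lia].
Qed.

Definition Dlt b a := sbr sigma (E (sconst b)) (Phi (sconst a)) N.

Lemma Dlt_C1der b : A' b -> is_C1der (phi 0%N) (Dlt b).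
Proof.
move=> hb; split.
  move=> k x y; rewrite /Dlt.
  have -> : Phi (sconst (k *: x + y)) = sadd (sscale k (Phi (sconst x))) (Phi (sconst y)).
    by apply: functional_extensionality => n; rewrite /sadd /sscale !sapp_const //; exact: (Hphik n k x y).
  by rewrite (sbr_addr Hsk) (sbr_scaler Hsk).
move=> a1 a2; rewrite /Dlt -smul_const.
rewrite (_ : Phi (smul (sconst a1) (sconst a2)) = smul (Phi (sconst a1)) (Phi (sconst a2))); last first.
  by apply: functional_extensionality => n; rewrite HPmul.
rewrite Hleib /sadd smul_low_l; last by move=> i hi; apply: IHc => //; exact: A'const.
rewrite smul_low_r; last by move=> i hi; apply: IHc => //; exact: A'const.
by rewrite !sapp_const // addrC [_ * phi 0%N a2]mulrC.
Qed.

Lemma Dlt_cocycle b : A' b -> forall a0 a1,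
  delta1 (pi 0%N) (sigma 0%N) (phi 0%N) (Dlt b) a0 a1 = 0.
Proof.
move=> hb a0 a1; have hc := A'const hb.
set F := E (sconst b); set G0 := Phi (sconst a0); set G1 := Phi (sconst a1).
have J := Hjac F G0 G1 N.
have t1 : sbr sigma F (sbr sigma G0 G1) N = Dlt b (pi 0%N a0 a1).
  rewrite (_ : sbr sigma G0 G1 = Phi (sbr pi (sconst a0) (sconst a1))); last first.
    by apply: functional_extensionality => n; rewrite HPbr.
  by rewrite /F red // sbr_0.
have t2 : sbr sigma G0 (sbr sigma G1 F) N = - sigma 0%N (phi 0%N a0) (Dlt b a1).
  rewrite sbr_lowr //; last by move=> l hl; rewrite Hanti IHc ?oppr0.
  by rewrite /G0 sapp_0 Hanti /Dlt (klinN (proj1 (Hsk 0%N) _)).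
have t3 : sbr sigma G1 (sbr sigma F G0) N = sigma 0%N (phi 0%N a1) (Dlt b a0).
  rewrite sbr_lowr //; last by move=> l hl; rewrite IHc.
  by rewrite /G1 sapp_0.
rewrite t1 t2 t3 in J; rewrite /delta1.
apply/eqP; rewrite -oppr_eq0 -J; apply/eqP.
by rewrite opprB opprB addrA addrAC.
Qed.

Lemma Dlt_eq b : A' b -> forall a, Dlt b a = sigma 0%N (phi 0%N a) (Delta Y N b).
Proof. move=> hb a; exact: (Hphi1 (Dlt_C1der hb) (Dlt_cocycle hb)). Qed.

Lemma sconst0 (c : B) : sconst c 0%N = c. Proof. by []. Qed.

Lemma DeltaE b : Delta Y N b = phi1 (Dlt b). Proof. by []. Qed.

Lemma E_scale k f : E (sscale k f) = sscale k (E f).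
Proof. by apply: functional_extensionality => n; rewrite /E sexp_scale. Qed.

Lemma E_mul f g : E (smul f g) = smul (E f) (E g).
Proof. by apply: functional_extensionality => n; rewrite /E sexp_mul. Qed.

Lemma E0 f : E f 0%N = f 0%N.
Proof. by rewrite /E sexp_0. Qed.

Lemma Delta_C1der' : is_C1der' A' (Delta Y N).
Proof.
split.
- move=> k x y hx hy.
  have eD : Dlt (k *: x + y) = fun a => (k *: 1) * Dlt x a + Dlt y a.
    apply: functional_extensionality => a; rewrite /Dlt.
    have -> : sconst (k *: x + y) = sadd (sscale k (sconst x)) (sconst y).
      by apply: functional_extensionality => n; rewrite /sadd /sscale /sconst; case: ifP; rewrite ?scaler0 ?addr0.
    by rewrite E_add (sbr_addl Hsk) E_scale (sbr_scalel Hsk) mulr_algl.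
  rewrite !DeltaE eD Hphi1_add; last exact: Dlt_C1der.
    by rewrite Hphi1_lin ?mulr_algl //; [exact: A'sc | exact: Dlt_C1der].
  by apply: C1der_mul; exact: Dlt_C1der.
- move=> x y hx hy.
  have eD : Dlt (x * y) = fun a => x * Dlt y a + y * Dlt x a.
    apply: functional_extensionality => a; rewrite /Dlt -smul_const E_mul Hanti Hleib /sadd.
    rewrite smul_low_l; last by move=> l hl; rewrite Hanti IHc ?oppr0 //; exact: A'const.
    rewrite smul_low_r; last by move=> l hl; rewrite Hanti IHc ?oppr0 //; exact: A'const.
    rewrite !E0 !sconst0 Hanti [sbr sigma _ (E (sconst y)) N]Hanti.
    by rewrite mulNr mulrN opprD !opprK addrC [_ * y]mulrC.
  rewrite !DeltaE eD Hphi1_add; [|by apply: C1der_mul; exact: Dlt_C1der..].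
  by rewrite !Hphi1_lin //; exact: Dlt_C1der.
Qed.

Let XN := h (Delta Y N).

Lemma prefS i : pref N.+1 i = if i == N then XN else Y i.
Proof. by rewrite /= hN andbT. Qed.

Lemma step : Inv N.+1.
Proof.
have hC := Delta_C1der'.
have HY'd : forall i, is_der (pref N.+1 i).
  by move=> i; rewrite prefS; case: ifP => _; [exact: Hh_der | exact: HYd].
have HY'0 : forall b, pref N.+1 0%N b = 0.
  by move=> b; rewrite prefS (_ : (0 == N)%N = false) ?HY0 //; apply/negbTE; lia.
have HY'l : forall i, klinear (pref N.+1 i) by move=> i; case: (HY'd i).
have agree : forall i b, (i < N)%N -> pref N.+1 i b = Y i b.
  by move=> i b hi; rewrite prefS (_ : (i == N) = false) //; apply/negbTE; lia.
split => //.
- by move=> i b hi; rewrite prefS (_ : (i == N) = false) ?HYN //; [lia | apply/negbTE; lia].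
move=> f g hf n hn.
case: (ltnP n N) => hnN.
  rewrite (@sbr_local _ _ sigma _ (E f)); first exact: IHc.
  move=> j hj; apply: (sexp_local (n := n)) => // i b hi; apply: agree; lia.
have -> : n = N by lia.
set d := XN (f 0%N).
rewrite (@sbr_local _ _ sigma _ (sadd (E f) (fun j => if j == N then d else 0))); last first.
  move=> j hj; rewrite /sadd; case: (ltnP j N) => hjN.
    rewrite (_ : (j == N) = false) ?addr0; last by apply/negbTE; lia.
    by apply: (sexp_local (n := j)) => // i b hi; apply: agree; lia.
  have -> : j = N by lia.
  rewrite eqxx (sexp_update HYl HY0 HY'l HY'0 hN (fun b => HYN b (leqnn N)) agree).
  by rewrite prefS eqxx.
rewrite (sbr_addl Hsk) red // [X in _ + X](sbr_lowl Hsk); last by move=> l hl /=; rewrite (_ : (l == N) = false) //; apply/negbTE; lia.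
rewrite eqxx sapp_0 //.
rewrite (_ : sbr sigma (E (sconst (f 0%N))) (Phi (sconst (g 0%N))) N = Dlt (f 0%N) (g 0%N)) //.
rewrite Dlt_eq // /d /XN Hh_ext //.
by rewrite [sigma 0%N (Delta Y N (f 0%N)) _]anti0 subrr.
Qed.

End Step.

Lemma InvAll N : (0 < N)%N -> Inv N.
Proof.
elim: N => [//|N ih] _; case: (posnP N) => [->|hN]; first exact: Inv1.
exact: step (ih hN).
Qed.

Lemma main_exists : exists X : nat -> B -> B,
    (forall b, X 0%N b = 0) /\ (forall k, is_der (X k)) /\
    forall (f : series B) (g : series A),
      (forall n, A' (f n)) ->
      forall n, sbr sigma (sexp X f) (Phi g) n = 0.
Proof.
exists (fun i => pref i.+1 i); split; first by case: Inv1.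
split; first by move=> k; case: (InvAll (ltn0Sn k)).
move=> f g hf n.
have [_ _ _ Hc] := InvAll (ltn0Sn n).
rewrite (@sbr_local _ _ sigma _ (sexp (pref n.+1) f)); first exact: Hc.
move=> j hj; apply: (sexp_local (n := n)) => // i b hi.
by rewrite (@pref_stable i.+1 n.+1 i).
Qed.

End Main.

Unset Implicit Arguments.

Theorem proposition3p12 (K : fieldType) (A B : comAlgType K)
  (pi : nat -> A -> A -> A) (sigma : nat -> B -> B -> B) (phi : nat -> A -> B)
  (HK : [pchar K] =i pred0)
  (HpiA : is_poisson (pi 0%N)) (HsigB : is_poisson (sigma 0%N))
  (Hpi : is_formal_poisson pi) (Hsigma : is_formal_poisson sigma)
  (HPhi : is_formal_poisson_morphism pi sigma phi)
  (* hypothesis (1) *)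
  (phi1 : (A -> B) -> B)
  (Hphi1_add : forall D1 D2, is_C1der (phi 0%N) D1 -> is_C1der (phi 0%N) D2 ->
      phi1 (fun a => D1 a + D2 a) = phi1 D1 + phi1 D2)
  (Hphi1_lin : forall (a' : B) D, in_commutant (sigma 0%N) (phi 0%N) a' ->
      is_C1der (phi 0%N) D -> phi1 (fun a => a' * D a) = a' * phi1 D)
  (Hphi1 : forall D, is_C1der (phi 0%N) D ->
      (forall a0 a1, delta1 (pi 0%N) (sigma 0%N) (phi 0%N) D a0 a1 = 0) ->
      forall a, D a = delta0 (sigma 0%N) (phi 0%N) (phi1 D) a)
  (* hypothesis (2) *)
  (h : (B -> B) -> (B -> B))
  (Hh_der : forall D, is_C1der' (in_commutant (sigma 0%N) (phi 0%N)) D ->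
      is_der (h D))
  (Hh_ext : forall D, is_C1der' (in_commutant (sigma 0%N) (phi 0%N)) D ->
      forall a', in_commutant (sigma 0%N) (phi 0%N) a' -> h D a' = D a')
  (Hh_add : forall D1 D2,
      is_C1der' (in_commutant (sigma 0%N) (phi 0%N)) D1 ->
      is_C1der' (in_commutant (sigma 0%N) (phi 0%N)) D2 ->
      forall b, h (fun x => D1 x + D2 x) b = h D1 b + h D2 b)
  (Hh_lin : forall (a' : B) D, in_commutant (sigma 0%N) (phi 0%N) a' ->
      is_C1der' (in_commutant (sigma 0%N) (phi 0%N)) D ->
      forall b, h (fun x => a' * D x) b = a' * h D b) :
  exists X : nat -> B -> B,
    (forall b, X 0%N b = 0) /\ (forall k, is_der (X k)) /\
    forall (f : series B) (g : series A),
      (forall n, in_commutant (sigma 0%N) (phi 0%N) (f n)) ->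
      forall n, sbr sigma (sexp X f) (sapp phi g) n = 0.
Proof.
eapply main_exists; eassumption.
Qed.
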